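(* Fix $a\in\mathbb{R}$. For delays $T>0$ with $aT<1$, let $k_u(T)$ denote the unique solution $k>|a|$ of $$T\sqrt{k^2-a^2}=\arccos\!\left(\frac{a}{k}\right).$$ Then $T\mapsto k_u(T)$ is decreasing and convex. Moreover, if $a>0$ then $$\lim_{T\to 1/a}k_u(T)=a,\qquad \lim_{T\to0^+}k_u(T)=+\infty,$$ and if $a<0$ then $$\lim_{T\to+\infty}k_u(T)=|a|,\qquad \lim_{T\to0^+}k_u(T)=+\infty .$$
   Context: Consider the scalar retarded system $\dot x(t)=a x(t)-k x(t-T)$ with $a,k\in\mathbb{R}$ and constant delay $T>0$. For $aT<1$, the set of gains $k$ for which this system is exponentially stable is exactly the open interval $(a,k_u)$, where $k_u$ is defined as in the claim. *)

(* Defs.v *)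
From Stdlib Require Export Reals.
From Coquelicot Require Export Coquelicot.
Open Scope R_scope.

Definition admissible (a T : R) : Prop := 0 < T /\ a * T < 1.

Definition ku_spec (a T k : R) : Prop :=
  Rabs a < k /\ T * sqrt (k ^ 2 - a ^ 2) = acos (a / k).

(* Main.v *)
Require Import Defs.
From Stdlib Require Import Reals Lra Psatz.
From Coquelicot Require Import Coquelicot.
Open Scope R_scope.


Lemma mvt_le (f df : R -> R) x y :
  x < y -> (forall z, x <= z <= y -> is_derive f z (df z)) ->
  exists c, x <= c <= y /\ f y - f x = df c * (y - x).
Proof.
  intros Hxy Hd.
  destruct (MVT_gen f x y df) as [c [Hc Hf]].
  - intros z Hz. apply Hd. rewrite Rmin_left in Hz by lra. rewrite Rmax_right in Hz by lra. lra.
  - intros z Hz. rewrite Rmin_left in Hz by lra. rewrite Rmax_right in Hz by lra.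
    apply derivable_continuous_pt. exists (df z). apply is_derive_Reals. apply Hd; lra.
  - exists c. rewrite Rmin_left in Hc by lra. rewrite Rmax_right in Hc by lra. split; auto.
Qed.

Lemma incr_le (f df : R -> R) x y :
  x <= y -> (forall z, x <= z <= y -> is_derive f z (df z)) ->
  (forall z, x <= z <= y -> 0 <= df z) -> f x <= f y.
Proof.
  intros Hxy Hd Hp. destruct (Req_dec x y) as [->|Hne]; [lra|].
  destruct (mvt_le f df x y) as [c [Hc Hf]]; [lra|auto|].
  assert (0 <= df c) by (apply Hp; lra). nra.
Qed.

Lemma decr_lt (f df : R -> R) l x y :
  (forall z, l < z -> is_derive f z (df z)) ->
  (forall z, l < z -> df z < 0) -> l < x -> x < y -> f y < f x.
Proof.
  intros Hd Hn Hx Hxy.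
  destruct (mvt_le f df x y) as [c [Hc Hf]]; [lra| intros; apply Hd; lra|].
  assert (df c < 0) by (apply Hn; lra). nra.
Qed.

Lemma convex_d2 (f df ddf : R -> R) l x y t :
  (forall z, l < z -> is_derive f z (df z)) ->
  (forall z, l < z -> is_derive df z (ddf z)) ->
  (forall z, l < z -> 0 <= ddf z) -> l < x -> l < y -> 0 <= t <= 1 ->
  f (t * x + (1 - t) * y) <= t * f x + (1 - t) * f y.
Proof.
  intros Hd Hdd Hp.
  assert (Hmon : forall u v, l < u -> u <= v -> df u <= df v).
  { intros u v Hu Huv. apply (incr_le df ddf); auto; intros; [apply Hdd|apply Hp]; lra. }
  assert (Hmain : forall x y t, l < x -> x < y -> 0 < t < 1 ->
     f (t * x + (1 - t) * y) <= t * f x + (1 - t) * f y).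
  { clear x y t. intros x y t Hx Hxy Ht.
    set (z := t * x + (1 - t) * y).
    assert (Hz : x < z < y) by (unfold z; nra).
    destruct (mvt_le f df x z) as [c1 [Hc1 Hf1]]; [lra| intros; apply Hd; lra|].
    destruct (mvt_le f df z y) as [c2 [Hc2 Hf2]]; [lra| intros; apply Hd; lra|].
    assert (df c1 <= df c2) by (apply Hmon; lra).
    assert (E1 : z - x = (1 - t) * (y - x)) by (unfold z; ring).
    assert (E2 : y - z = t * (y - x)) by (unfold z; ring).
    rewrite E1 in Hf1. rewrite E2 in Hf2.
    assert (t * (1 - t) * (y - x) * (df c1 - df c2) <= 0).
    { assert (0 < t * (1 - t) * (y - x)) by (apply Rmult_lt_0_compat; nra).
      nra. }
    nra. }
  intros Hx Hy Ht.
  destruct (Req_dec t 0) as [->|Ht0]. { replace (0 * x + (1 - 0) * y) with y by ring. lra. }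
  destruct (Req_dec t 1) as [->|Ht1]. { replace (1 * x + (1 - 1) * y) with x by ring. lra. }
  destruct (Rtotal_order x y) as [H|[H|H]].
  - apply Hmain; lra.
  - subst. replace (t * y + (1 - t) * y) with y by ring. lra.
  - replace (t * x + (1 - t) * y) with ((1 - t) * y + (1 - (1 - t)) * x) by ring.
    replace (t * f x + (1 - t) * f y) with ((1 - t) * f y + (1 - (1 - t)) * f x) by ring.
    apply Hmain; lra.
Qed.

Lemma p_deriv z : is_derive (fun x => sin x - x * cos x) z (z * sin z).
Proof. auto_derive; auto. ring. Qed.

Lemma p_le th : 0 <= th <= PI -> th * cos th <= sin th.
Proof.
  intros H.
  assert (0 * cos 0 <= sin 0).
  { rewrite sin_0. lra. }
  pose proof (incr_le (fun x => sin x - x * cos x) (fun z => z * sin z) 0 th ltac:(lra)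
     (fun z _ => p_deriv z)) as K.
  simpl in K. rewrite sin_0, Rmult_0_l in K.
  enough (0 <= th * sin th - 0) by (specialize (K ltac:(intros z Hz; pose proof (sin_ge_0 z); nra)); lra).
  pose proof (sin_ge_0 th). nra.
Qed.

Lemma p_lt th : 0 < th < PI -> th * cos th < sin th.
Proof.
  intros H.
  destruct (mvt_le (fun x => sin x - x * cos x) (fun z => z * sin z) (th/2) th ltac:(lra)
     (fun z _ => p_deriv z)) as [c [Hc Hf]].
  pose proof (p_le (th/2) ltac:(lra)).
  assert (0 < sin c) by (apply sin_gt_0; lra).
  assert (0 < c * sin c * (th - th/2)) by (apply Rmult_lt_0_compat; nra).
  simpl in Hf. lra.
Qed.


Definition hfun (x : R) := x * (3 - sin x ^ 2) - cos x * sin x * (3 + sin x ^ 2).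

Lemma h_deriv z : is_derive hfun z (2 * sin z * (sin z + 2 * sin z ^ 3 - z * cos z)).
Proof.
  unfold hfun. auto_derive; auto.
  assert (E : sin z ^ 2 + cos z ^ 2 = 1) by (rewrite <- (sin2_cos2 z); unfold Rsqr; ring).
  transitivity (2 * sin z * (sin z + 2 * sin z ^ 3 - z * cos z)
     - 3 * (1 + sin z ^ 2) * (sin z ^ 2 + cos z ^ 2 - 1)); [ring|].
  rewrite E. ring.
Qed.

Lemma h_nonneg th : 0 <= th <= PI -> 0 <= hfun th.
Proof.
  intros H.
  assert (hfun 0 = 0) by (unfold hfun; rewrite sin_0; ring).
  enough (hfun 0 <= hfun th) by lra.
  apply (incr_le hfun _ 0 th ltac:(lra) (fun z _ => h_deriv z)).
  intros z Hz. pose proof (p_le z ltac:(lra)). pose proof (sin_ge_0 z ltac:(lra) ltac:(lra)).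
  assert (0 <= sin z ^ 3) by (apply pow_le; lra).
  apply Rmult_le_pos; nra.
Qed.


Definition Sf (a k : R) := sqrt (k ^ 2 - a ^ 2).
Definition Af (a k : R) := acos (a / k).
Definition gf (a k : R) := Af a k / Sf a k.
Definition g1 (a k : R) := a / (k * Sf a k ^ 2) - Af a k * k / Sf a k ^ 3.
Definition g2 (a k : R) := - a / (k ^ 2 * Sf a k ^ 2) - 3 * a / Sf a k ^ 4
   - Af a k / Sf a k ^ 3 + 3 * Af a k * k ^ 2 / Sf a k ^ 5.

Section B.
Lemma bnd a k : Rabs a < k -> - k < a < k /\ 0 < k.
Proof. intros H. destruct (Rabs_def2 _ _ H). pose proof (Rabs_pos a). lra. Qed.

Lemma Sf_pos a k : Rabs a < k -> 0 < Sf a k.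
Proof. intros H. destruct (bnd a k H). unfold Sf. apply sqrt_lt_R0. nra. Qed.

Lemma Sf_sq a k : Rabs a < k -> Sf a k ^ 2 = k ^ 2 - a ^ 2.
Proof. intros H. destruct (bnd a k H). unfold Sf. apply pow2_sqrt. nra. Qed.

Lemma div_rng a k : Rabs a < k -> -1 < a / k < 1.
Proof.
  intros H. destruct (bnd a k H).
  split; [apply Rmult_lt_reg_r with k|apply Rmult_lt_reg_r with k]; auto;
  unfold Rdiv; rewrite Rmult_assoc, Rinv_l by lra; lra.
Qed.

Lemma sqrt1 a k : Rabs a < k -> sqrt (1 - (a / k)²) = Sf a k / k.
Proof.
  intros H. destruct (bnd a k H). pose proof (Sf_pos a k H).
  assert (0 <= 1 - (a/k)²).
  { pose proof (div_rng a k H). unfold Rsqr. nra. }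
  apply Rsqr_inj.
  - apply sqrt_pos.
  - apply Rlt_le, Rdiv_lt_0_compat; lra.
  - rewrite Rsqr_sqrt by auto. unfold Rsqr. rewrite <- (Rmult_1_r (Sf a k)).
    replace (Sf a k * 1 / k * (Sf a k * 1 / k)) with (Sf a k ^ 2 / k ^ 2) by (field; lra).
    rewrite Sf_sq by auto. field. lra.
Qed.

Lemma cosA a k : Rabs a < k -> cos (Af a k) = a / k.
Proof. intros H. pose proof (div_rng a k H). unfold Af. apply cos_acos. lra. Qed.

Lemma sinA a k : Rabs a < k -> sin (Af a k) = Sf a k / k.
Proof. intros H. pose proof (div_rng a k H). unfold Af. rewrite sin_acos by lra. apply sqrt1; auto. Qed.

Lemma A_rng a k : Rabs a < k -> 0 < Af a k < PI.
Proof. intros H. apply acos_bound_lt. apply div_rng; auto. Qed.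

Lemma D_S a k : Rabs a < k -> is_derive (Sf a) k (k / Sf a k).
Proof.
  intros H. destruct (bnd a k H). pose proof (Sf_pos a k H). unfold Sf in *.
  auto_derive. nra. replace (k * (k * 1) + - (a * (a * 1))) with (k ^ 2 - a ^ 2) by ring. field. lra.
Qed.

Lemma D_A a k : Rabs a < k -> is_derive (Af a) k (a / (k * Sf a k)).
Proof.
  intros H. destruct (bnd a k H). pose proof (Sf_pos a k H).
  pose proof (div_rng a k H).
  assert (Hac : is_derive acos (a / k) (-1 / sqrt (1 - (a/k)²))).
  { apply is_derive_Reals. apply derive_pt_eq_1 with (derivable_pt_acos _ H3).
    apply derive_pt_acos. }
  rewrite sqrt1 in Hac by auto.
  unfold Af.
  assert (Hd : is_derive (fun x => a / x) k (- a / k ^ 2)).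
  { auto_derive. lra. field. lra. }
  pose proof (is_derive_comp acos (fun x => a / x) k _ _ Hac Hd) as K.
  simpl in K. unfold scal in K; simpl in K; unfold mult in K; simpl in K.
  replace (a / (k * Sf a k)) with (- a / k ^ 2 * (-1 / (Sf a k / k))) by (field; lra).
  exact K.
Qed.
End B.


Lemma D_g a k : Rabs a < k -> is_derive (gf a) k (g1 a k).
Proof.
  intros H. destruct (bnd a k H). pose proof (Sf_pos a k H).
  pose proof (D_S a k H) as HS. pose proof (D_A a k H) as HA.
  unfold gf. auto_derive.
  - repeat split; try (eexists; eauto). lra.
  - replace (Derive (fun x => Sf a x) k) with (k / Sf a k) by (symmetry; apply is_derive_unique; exact HS). replace (Derive (fun x => Af a x) k) with (a / (k * Sf a k)) by (symmetry; apply is_derive_unique; exact HA).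
    unfold g1. field. lra.
Qed.

Lemma D_g1 a k : Rabs a < k -> is_derive (g1 a) k (g2 a k).
Proof.
  intros H. destruct (bnd a k H). pose proof (Sf_pos a k H).
  pose proof (D_S a k H) as HS. pose proof (D_A a k H) as HA.
  unfold g1. auto_derive.
  - repeat split; try (eexists; eauto); apply Rgt_not_eq; repeat apply Rmult_lt_0_compat; lra.
  - replace (Derive (fun x => Sf a x) k) with (k / Sf a k) by (symmetry; apply is_derive_unique; exact HS). replace (Derive (fun x => Af a x) k) with (a / (k * Sf a k)) by (symmetry; apply is_derive_unique; exact HA).
    unfold g2. field. lra.
Qed.


Ltac gen_AS a k H :=
  destruct (bnd a k H) as [Hb Hk];
  pose proof (Sf_pos a k H) as HSp;
  pose proof (cosA a k H) as Hc; pose proof (sinA a k H) as Hsn; pose proof (A_rng a k H) as HAr;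
  unfold gf, g1, g2 in *;
  generalize dependent (Af a k); intros A Hc Hsn HAr;
  generalize dependent (Sf a k); intros S HSp Hsn;
  assert (Ea : a = k * cos A) by (rewrite Hc; field; lra);
  assert (ES : S = k * sin A) by (rewrite Hsn; field; lra);
  subst S; try rewrite Ea; clear Hc Hsn.

Lemma g1_neg a k : Rabs a < k -> g1 a k < 0.
Proof.
  intros H. gen_AS a k H.
  assert (0 < sin A) by (apply sin_gt_0; lra).
  pose proof (sin_lt_x A ltac:(lra)). pose proof (COS_bound A).
  replace (k * cos A / (k * (k * sin A) ^ 2) - A * k / (k * sin A) ^ 3)
    with ((cos A * sin A - A) / (k ^ 2 * sin A ^ 3)) by (field; lra).
  apply Rdiv_neg_pos. nra. apply Rmult_lt_0_compat; apply pow_lt; lra.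
Qed.

Lemma g2_nonneg a k : Rabs a < k -> 0 <= g2 a k.
Proof.
  intros H. gen_AS a k H.
  assert (0 < sin A) by (apply sin_gt_0; lra).
  pose proof (h_nonneg A ltac:(lra)). unfold hfun in *.
  match goal with |- 0 <= ?e => replace e with
    ((A * (3 - sin A ^ 2) - cos A * sin A * (3 + sin A ^ 2)) / (k ^ 3 * sin A ^ 5)) by (field; lra) end.
  apply Rdiv_le_0_compat. lra. apply Rmult_lt_0_compat; apply pow_lt; lra.
Qed.


Lemma g_pos a k : Rabs a < k -> 0 < gf a k.
Proof. intros H. gen_AS a k H. assert (0 < sin A) by (apply sin_gt_0; lra).
  apply Rdiv_lt_0_compat; nra. Qed.

Lemma g_decr a x y : Rabs a < x -> x < y -> gf a y < gf a x.
Proof.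
  intros Hx Hxy. apply (decr_lt (gf a) (g1 a) (Rabs a)); auto.
  - intros; apply D_g; auto.
  - intros; apply g1_neg; auto.
Qed.

Lemma g_decr_le a x y : Rabs a < x -> x <= y -> gf a y <= gf a x.
Proof. intros Hx Hxy. destruct (Req_dec x y) as [->|]; [lra|]. apply Rlt_le, g_decr; lra. Qed.

Lemma g_convex a x y t : Rabs a < x -> Rabs a < y -> 0 <= t <= 1 ->
  gf a (t * x + (1 - t) * y) <= t * gf a x + (1 - t) * gf a y.
Proof.
  intros. apply (convex_d2 (gf a) (g1 a) (g2 a) (Rabs a)); auto.
  - intros; apply D_g; auto.
  - intros; apply D_g1; auto.
  - intros; apply g2_nonneg; auto.
Qed.

Lemma g_cont a k : Rabs a < k -> continuity_pt (gf a) k.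
Proof. intros H. apply derivable_continuous_pt. exists (g1 a k). apply is_derive_Reals. apply D_g; auto. Qed.

Lemma g_gt_inv a k : Rabs a < k -> / k < gf a k.
Proof. intros H. gen_AS a k H. assert (0 < sin A) by (apply sin_gt_0; lra).
  pose proof (sin_lt_x A ltac:(lra)).
  apply Rmult_lt_reg_r with (k * sin A). nra.
  replace (/ k * (k * sin A)) with (sin A) by (field; lra).
  replace (A / (k * sin A) * (k * sin A)) with A by (field; nra). lra. Qed.

Lemma g_lt_inva a k : 0 < a -> Rabs a < k -> gf a k < / a.
Proof. intros Ha H. pose proof (div_rng a k H). gen_AS a k H.
  assert (0 < sin A) by (apply sin_gt_0; lra).
  assert (0 < cos A). { apply Rmult_lt_reg_l with k; lra. }
  pose proof (p_lt A HAr).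
  apply Rmult_lt_reg_r with (k * sin A * (k * cos A)). repeat apply Rmult_lt_0_compat; lra.
  replace (A / (k * sin A) * (k * sin A * (k * cos A))) with (k * (A * cos A)) by (field; nra).
  replace (/ (k * cos A) * (k * sin A * (k * cos A))) with (k * sin A) by (field; nra).
  nra. Qed.

Lemma A_ge a k : a <= 0 -> Rabs a < k -> PI / 2 <= Af a k.
Proof. intros Ha H. destruct (bnd a k H). pose proof (cosA a k H). pose proof (A_rng a k H).
  destruct (Rle_lt_dec (PI/2) (Af a k)) as [|Hl]; auto.
  assert (0 < cos (Af a k)) by (apply cos_gt_0; lra).
  assert (a / k <= 0). { unfold Rdiv. assert (0 < / k) by (apply Rinv_0_lt_compat; lra). nra. }
  lra. Qed.

Definition kk (a x : R) := sqrt (a ^ 2 + x ^ 2).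

Lemma kk_gt a x : 0 < x -> Rabs a < kk a x.
Proof. intros Hx. unfold kk. rewrite <- (sqrt_pow2 (Rabs a)) by apply Rabs_pos.
  apply sqrt_lt_1. apply pow2_ge_0. nra. rewrite pow2_abs. nra. Qed.

Lemma Sf_kk a x : 0 < x -> Sf a (kk a x) = x.
Proof. intros Hx. unfold Sf, kk. rewrite pow2_sqrt by nra.
  replace (a ^ 2 + x ^ 2 - a ^ 2) with (x ^ 2) by ring. apply sqrt_pow2; lra. Qed.

Lemma g_kk_lt a x : 0 < x -> gf a (kk a x) < PI / x.
Proof. intros Hx. pose proof (A_rng a _ (kk_gt a x Hx)). unfold gf. rewrite Sf_kk by auto.
  unfold Rdiv. apply Rmult_lt_compat_r. apply Rinv_0_lt_compat; auto. lra. Qed.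

Lemma g_kk_ge a x : a <= 0 -> 0 < x -> PI / (2 * x) <= gf a (kk a x).
Proof. intros Ha Hx. pose proof (A_ge a _ Ha (kk_gt a x Hx)). unfold gf. rewrite Sf_kk by auto.
  replace (PI / (2 * x)) with ((PI / 2) / x) by (field; lra).
  unfold Rdiv. apply Rmult_le_compat_r. left; apply Rinv_0_lt_compat; auto. lra. Qed.


Lemma spec_g a T k : ku_spec a T k -> Rabs a < k /\ gf a k = T.
Proof. intros [H E]. split; auto. pose proof (Sf_pos a k H). unfold gf, Af, Sf in *.
  rewrite <- E. field. lra. Qed.

Lemma g_spec a T k : Rabs a < k -> gf a k = T -> ku_spec a T k.
Proof. intros H E. split; auto. pose proof (Sf_pos a k H). unfold gf, Af, Sf in *.
  rewrite <- E. field. lra. Qed.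

Lemma exists_k a T : admissible a T -> exists k, Rabs a < k /\ gf a k = T.
Proof.
  intros [HT HaT].
  assert (Hlow : exists k1, Rabs a < k1 /\ T <= gf a k1).
  { destruct (Rlt_le_dec 0 a) as [Ha|Ha].
    - exists (/ T). assert (Rabs a < / T).
      { rewrite Rabs_right by lra. apply Rmult_lt_reg_r with T; auto. rewrite Rinv_l; lra. }
      split; auto. pose proof (g_gt_inv a _ H). rewrite Rinv_inv in H0. lra.
    - assert (Hx : 0 < PI / (2 * T)) by (apply Rdiv_lt_0_compat; pose proof PI_RGT_0; lra).
      exists (kk a (PI / (2 * T))). split. apply kk_gt; auto.
      pose proof (g_kk_ge a _ Ha Hx).
      replace (PI / (2 * (PI / (2 * T)))) with T in H by (field; pose proof PI_RGT_0; lra). auto. }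
  assert (Hx : 0 < PI / T) by (apply Rdiv_lt_0_compat; pose proof PI_RGT_0; lra).
  pose proof (g_kk_lt a _ Hx) as Hup.
  replace (PI / (PI / T)) with T in Hup by (field; pose proof PI_RGT_0; lra).
  pose proof (kk_gt a _ Hx) as Hk2. set (k2 := kk a (PI / T)) in *.
  destruct Hlow as [k1 [Hk1 Hg1]].
  destruct (Req_dec (gf a k1) T) as [E|NE]. { exists k1; auto. }
  assert (Hlt : k1 < k2).
  { destruct (Rlt_le_dec k1 k2) as [|Hle]; auto. pose proof (g_decr_le a k2 k1 Hk2 Hle). lra. }
  destruct (Ranalysis5.IVT_interv (fun k => T - gf a k) k1 k2) as [z [Hz Ez]]; auto.
  - intros z Hz. apply continuity_pt_minus. apply continuity_pt_const. intros u v; auto.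
    apply g_cont. lra.
  - simpl. lra.
  - simpl. lra.
  - exists z. split. lra. simpl in Ez. lra.
Qed.


Lemma lim0 a (ku : R -> R) :
  (forall T, admissible a T -> Rabs a < ku T /\ gf a (ku T) = T) ->
  filterlim ku (at_right 0) (Rbar_locally p_infty).
Proof.
  intros HG P [M HM].
  set (K := Rmax M (Rabs a) + 1).
  assert (HK : Rabs a < K) by (unfold K; pose proof (Rmax_r M (Rabs a)); lra).
  pose proof (g_pos a K HK) as Hd.
  exists (mkposreal _ Hd). intros T HTb HT0. simpl in HTb.
  change (Rabs (T - 0) < gf a K) in HTb. rewrite Rminus_0_r, Rabs_right in HTb by lra.
  assert (Hadm : admissible a T).
  { split; auto. destruct (Rlt_le_dec 0 a) as [Ha|Ha].
    - pose proof (g_lt_inva a K Ha HK).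
      apply Rlt_le_trans with (a * / a). apply Rmult_lt_compat_l; lra. rewrite Rinv_r; lra.
    - nra. }
  destruct (HG T Hadm) as [H1 H2].
  apply HM. destruct (Rlt_le_dec K (ku T)) as [L|L].
  - unfold K in L. pose proof (Rmax_l M (Rabs a)). lra.
  - pose proof (g_decr_le a (ku T) K H1 L). lra.
Qed.

Theorem proposition2 (a : R) :
  (forall T, admissible a T -> exists! k, ku_spec a T k) /\
  (forall ku : R -> R,
     (forall T, admissible a T -> ku_spec a T (ku T)) ->
     (forall T1 T2, admissible a T1 -> admissible a T2 -> T1 < T2 ->
        ku T2 < ku T1) /\
     (forall T1 T2 t, admissible a T1 -> admissible a T2 -> 0 <= t <= 1 ->
        ku (t * T1 + (1 - t) * T2) <= t * ku T1 + (1 - t) * ku T2) /\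
     (0 < a ->
        filterlim ku (at_left (/ a)) (locally a) /\
        filterlim ku (at_right 0) (Rbar_locally p_infty)) /\
     (a < 0 ->
        filterlim ku (Rbar_locally p_infty) (locally (Rabs a)) /\
        filterlim ku (at_right 0) (Rbar_locally p_infty))).
Proof.
  split.
  { intros T HT. destruct (exists_k a T HT) as [k [Hk E]]. exists k. split.
    - apply g_spec; auto.
    - intros k' Hk'. apply spec_g in Hk' as [Hk' E'].
      destruct (Rtotal_order k k') as [L|[L|L]]; auto;
      [pose proof (g_decr a k k' Hk L) | pose proof (g_decr a k' k Hk' L)]; lra. }
  intros ku Hku.
  assert (HG : forall T, admissible a T -> Rabs a < ku T /\ gf a (ku T) = T)
    by (intros; apply spec_g; auto).
  split.
  { intros T1 T2 H1 H2 Hlt. destruct (HG _ H1) as [A1 B1], (HG _ H2) as [A2 B2].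
    destruct (Rlt_le_dec (ku T2) (ku T1)) as [|L]; auto.
    pose proof (g_decr_le a (ku T1) (ku T2) A1 L). lra. }
  split.
  { intros T1 T2 t H1 H2 Ht.
    destruct (HG _ H1) as [A1 B1], (HG _ H2) as [A2 B2].
    destruct H1 as [P1 Q1], H2 as [P2 Q2].
    assert (Hadm : admissible a (t * T1 + (1 - t) * T2)).
    { split.
      - destruct (Rle_lt_dec t 0). { assert (t = 0) by lra. subst. lra. }
        assert (0 <= (1 - t) * T2) by nra. nra.
      - set (m := Rmax (a * T1 - 1) (a * T2 - 1)).
        assert (m < 0) by (unfold m; apply Rmax_lub_lt; lra).
        assert (a * T1 - 1 <= m) by apply Rmax_l. assert (a * T2 - 1 <= m) by apply Rmax_r.
        assert (t * (a * T1 - 1) <= t * m) by nra.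
        assert ((1 - t) * (a * T2 - 1) <= (1 - t) * m) by nra.
        nra. }
    destruct (HG _ Hadm) as [A B].
    assert (Hm : Rabs a < t * ku T1 + (1 - t) * ku T2).
    { assert (E0 : t * ku T1 + (1 - t) * ku T2 - Rabs a = t * (ku T1 - Rabs a) + (1 - t) * (ku T2 - Rabs a)) by ring.
      destruct (Rle_lt_dec t 0).
      - assert (t = 0) by lra. subst. lra.
      - assert (0 < t * (ku T1 - Rabs a)) by (apply Rmult_lt_0_compat; lra).
        assert (0 <= (1 - t) * (ku T2 - Rabs a)) by (apply Rmult_le_pos; lra). lra. }
    pose proof (g_convex a (ku T1) (ku T2) t A1 A2 Ht) as C. rewrite B1, B2 in C.
    destruct (Rle_lt_dec (ku (t * T1 + (1 - t) * T2)) (t * ku T1 + (1 - t) * ku T2)) as [|L]; auto.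
    pose proof (g_decr a _ _ Hm L). lra. }
  split.
  { intros Ha. split; [|apply (lim0 a); auto].
    apply filterlim_locally. intros eps.
    assert (Hae : Rabs a < a + eps) by (rewrite Rabs_right by lra; destruct eps; simpl; lra).
    pose proof (g_lt_inva a _ Ha Hae) as Hl. pose proof (g_pos a _ Hae) as Hp.
    assert (Hd : 0 < / a - gf a (a + eps)) by lra.
    exists (mkposreal _ Hd). intros T HTb HTl. simpl in HTb.
    change (Rabs (T - / a) < / a - gf a (a + eps)) in HTb.
    apply Rabs_def2 in HTb.
    assert (Hadm : admissible a T).
    { split. lra. apply Rlt_le_trans with (a * / a). apply Rmult_lt_compat_l; lra. rewrite Rinv_r; lra. }
    destruct (HG T Hadm) as [H1 H2]. rewrite Rabs_right in H1 by lra.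
    change (Rabs (ku T - a) < eps). apply Rabs_def1.
    - destruct (Rlt_le_dec (ku T) (a + eps)) as [|L]; [lra|].
      pose proof (g_decr_le a (a + eps) (ku T) Hae L). lra.
    - destruct eps; simpl in *; lra. }
  { intros Ha. split; [|apply (lim0 a); auto].
    apply filterlim_locally. intros eps.
    assert (Hae : Rabs a < Rabs a + eps) by (destruct eps; simpl; lra).
    exists (Rmax 0 (gf a (Rabs a + eps))). intros T HT.
    pose proof (Rmax_l 0 (gf a (Rabs a + eps))). pose proof (Rmax_r 0 (gf a (Rabs a + eps))).
    assert (Hadm : admissible a T) by (split; nra).
    destruct (HG T Hadm) as [H1 H2].
    change (Rabs (ku T - Rabs a) < eps). apply Rabs_def1.
    - destruct (Rlt_le_dec (ku T) (Rabs a + eps)) as [|L]; [lra|].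
      pose proof (g_decr_le a (Rabs a + eps) (ku T) Hae L). lra.
    - destruct eps; simpl in *; lra. }
Qed.
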